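(* Let $m,p\in\mathbb{N}$ with $m\ge p$, let $w=(w_1,\dots,w_m)^t\in\mathbb{R}^m$, and let $Z=(z_1,\dots,z_m)^t$ be an $m\times p$ real matrix such that any set of $p$ distinct row vectors of $Z$ is linearly independent. Then there exist $R>0$ and $\delta>0$ (possibly depending on $w$ and $Z$) such that $$\prod_{i=1}^m\frac{1}{1+|w_i-z_i^t\beta|}\le\frac{1}{(1+\delta|\beta|)^{m-p+1}}$$ for all $\beta\in\mathbb{R}^p$ with $|\beta|\ge R$.
   Context: $|\beta|$ is the Euclidean norm. *)

(* Defs.v *)
From HB Require Import structures.
From mathcomp Require Import all_boot all_order all_algebra.
From mathcomp Require Import reals.
Set Implicit Arguments. Unset Strict Implicit. Unset Printing Implicit Defensive.
Import Order.TTheory GRing.Theory Num.Theory.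
Local Open Scope ring_scope.

Definition eucl_norm (R : realType) (p : nat) (v : 'cV[R]_p) : R :=
  Num.sqrt (\sum_(j < p) v j 0 ^+ 2).

Definition rows_in_general_position (R : realType) (m p : nat)
  (Z : 'M[R]_(m, p)) : Prop :=
  forall f : 'I_p -> 'I_m, injective f -> row_free (rowsub f Z).

(* Main.v *)
Require Import Defs.
From HB Require Import structures.
From mathcomp Require Import all_boot all_order all_algebra.
From mathcomp Require Import reals.
From mathcomp Require Import ring lra zify.
Import Order.TTheory GRing.Theory Num.Theory.
Local Open Scope ring_scope.

Lemma sq_sum_le (R : realType) (I : Type) (s : seq I) (F : I -> R) :
  \sum_(i <- s) F i ^+ 2 <= (\sum_(i <- s) `|F i|) ^+ 2.
Proof.
elim: s => [|a s IH]; first by rewrite !big_nil expr2 mulr0.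
rewrite !big_cons.
have h0 : 0 <= \sum_(i <- s) `|F i| by apply: sumr_ge0 => i _.
have ha := normr_ge0 (F a).
rewrite -(real_normK (num_real (F a))).
nra.
Qed.

Lemma eucl_le (R : realType) p (v : 'cV[R]_p) :
  eucl_norm v <= \sum_j `|v j 0|.
Proof.
rewrite /eucl_norm.
have h0 : 0 <= \sum_j `|v j 0| by apply: sumr_ge0 => i _.
rewrite -[X in _ <= X](ger0_norm h0) -sqrtr_sqr ler_sqrt ?sqr_ge0 //.
exact: sq_sum_le.
Qed.

Lemma inv_bound (R : realType) p (A : 'M[R]_p) (b : 'cV[R]_p) (M : R) :
  A \in unitmx -> (forall k, `|(A *m b) k 0| <= M) ->
  \sum_j `|b j 0| <= (\sum_j \sum_k `|invmx A j k|) * M.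
Proof.
move=> uA hM.
have eb : b = invmx A *m (A *m b) by rewrite mulKmx.
rewrite {1}eb mulr_suml; apply: ler_sum => j _.
rewrite mxE mulr_suml.
apply: le_trans (ler_norm_sum _ _ _) _.
apply: ler_sum => k _.
by rewrite normrM ler_wpM2l.
Qed.

Lemma term_le_sum (R : realType) (T : finType) (F : T -> R) (x : T) :
  (forall y, 0 <= F y) -> F x <= \sum_y F y.
Proof.
move=> h; rewrite (bigD1 x) //= lerDl; exact: sumr_ge0.
Qed.

Theorem lemmaS4 (R : realType) (m p : nat) (hmp : (p <= m)%N)
  (w : 'cV[R]_m) (Z : 'M[R]_(m, p)) (hZ : rows_in_general_position Z) :
  exists Rr : R, 0 < Rr /\ exists delta : R, 0 < delta /\
    forall beta : 'cV[R]_p, Rr <= eucl_norm beta ->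
      \prod_(i < m) (1 + `|w i 0 - (Z *m beta) i 0|)^-1
        <= ((1 + delta * eucl_norm beta) ^+ (m - p + 1))^-1.
Proof.
pose W := \sum_i `|w i 0|.
pose C (f : {ffun 'I_p -> 'I_m}) := \sum_j \sum_k `|invmx (rowsub f Z) j k|.
pose K := 1 + \sum_f C f.
have C0 : forall f, 0 <= C f.
  by move=> f; apply: sumr_ge0 => j _; apply: sumr_ge0 => k _.
have K1 : 1 <= K by rewrite /K lerDl; apply: sumr_ge0.
have K0 : 0 < K by lra.
have W0 : 0 <= W by apply: sumr_ge0.
have KW0 : 0 <= K * W by apply: mulr_ge0 => //; lra.
exists (2 * (K * W) + 1); split; first lra.
exists (2 * K)^-1; split; first by rewrite invr_gt0; lra.
move=> beta hb.
pose N : R := eucl_norm beta.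
pose N1 : R := \sum_j `|beta j 0|.
have NN1 : N <= N1 := @eucl_le R p beta.
have hb' : 2 * (K * W) + 1 <= N := hb.
have N0 : 0 < N by lra.
set B := [set i | `|(Z *m beta) i 0| < N1 / K].
have hB : (#|B| < p)%N.
  rewrite ltnNge; apply/negP => hp.
  pose F := [ffun k : 'I_p => enum_val (widen_ord hp k)].
  have injF : injective F.
    move=> k1 k2; rewrite !ffunE => /enum_val_inj h.
    by apply: val_inj; exact: (congr1 val h).
  have uA : rowsub F Z \in unitmx by rewrite -row_free_unit; apply: hZ.
  have hM : forall k, `|(rowsub F Z *m beta) k 0| <= N1 / K.
    move=> k.
    have -> : (rowsub F Z *m beta) k 0 = (Z *m beta) (F k) 0.
      by rewrite !mxE; apply: eq_bigr => j _; rewrite mxE.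
    have : F k \in B by rewrite ffunE; apply: enum_valP.
    by rewrite inE => /ltW.
  have h := @inv_bound R p _ _ _ uA hM.
  have CF : C F <= K - 1.
    rewrite /K addrAC subrr add0r; exact: (@term_le_sum R _ C F C0).
  have h2 : N1 <= (K - 1) * (N1 / K).
    apply: le_trans h _; apply: ler_wpM2r => //.
    by apply: divr_ge0; lra.
  have e : (K - 1) * (N1 / K) = N1 - N1 / K by field; lra.
  have pos : 0 < N1 / K by apply: divr_gt0; lra.
  lra.
have hG : (m - p + 1 <= #|~: B|)%N.
  have := cardsC B; rewrite card_ord; lia.
set c := (1 + (2 * K)^-1 * N)^-1.
have dN : 0 <= (2 * K)^-1 * N by apply: mulr_ge0 => //; [rewrite invr_ge0|]; lra.
have c0 : 0 <= c by rewrite invr_ge0; lra.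
have c1 : c <= 1 by rewrite invf_le1; lra.
have WN : W <= (2 * K)^-1 * N.
  rewrite mulrC ler_pdivlMr; lra.
have eNK : N1 / K = 2 * ((2 * K)^-1 * N1) by field; lra.
have NN1' : (2 * K)^-1 * N <= (2 * K)^-1 * N1.
  by apply: ler_wpM2l => //; rewrite invr_ge0; lra.
rewrite -exprVn.
apply: le_trans (_ : \prod_(i < m) (if i \in ~: B then c else 1) <= _).
  apply: ler_prod => i _.
  have hpos : 0 < 1 + `|w i 0 - (Z *m beta) i 0| by have := normr_ge0 (w i 0 - (Z *m beta) i 0); lra.
  rewrite invr_ge0 (ltW hpos) /=.
  case: ifP => hi; last by rewrite invf_le1 // lerDl.
  rewrite /c lef_pV2 ?posrE //; last lra.
  move: hi; rewrite !inE -leNgt => hx.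
  have hwi : `|w i 0| <= W by apply: (@term_le_sum R _ (fun i => `|w i 0|) i) => y.
  have tri : `|(Z *m beta) i 0| <= `|w i 0 - (Z *m beta) i 0| + `|w i 0|.
    rewrite distrC; have := ler_normD ((Z *m beta) i 0 - w i 0) (w i 0).
    by rewrite subrK.
  lra.
rewrite -big_mkcond /= prodr_const.
exact: ler_wiXn2l.
Qed.
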